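(* Let $A\in\mathbb{R}^{n\times n}$ be Metzler and Hurwitz stable, let $b_0\in\mathbb{R}^n_{\ge0}$, let $\mu,\theta,\eta,k_i,k_p>0$, and set $r:=\mu/\theta$, $g_1:=-e_n^TA^{-1}e_1$, $g_n:=-e_n^TA^{-1}e_n$, $g_0:=-e_n^TA^{-1}b_0$. Assume $g_1\neq0$. Consider the closed-loop system $$\dot x=Ax+k_iz_1e_1-k_px_nz_2e_n+b_0,\qquad \dot z_1=\mu-\eta z_1z_2,\qquad \dot z_2=\theta x_n-\eta z_1z_2,$$ with $x\in\mathbb{R}^n$, $z_1,z_2\in\mathbb{R}$. Then the polynomial $$P_1(z):=\eta g_1k_iz^2+(g_0-r)\eta z-g_nk_p\mu r$$ has exactly one positive root $z_1^*$, and the system has exactly one equilibrium $(x^*,z_1^*,z_2^* )$ with $z_1^*>0$; it is given by $x^*_n=r$, $$z_2^*=\frac{\mu}{\eta z_1^*},\qquad x^*=-A^{-1}\Big(k_iz_1^*e_1-\frac{k_p r\mu}{\eta z_1^*}e_n+b_0\Big).$$ Equivalently, $z_1^*=\mu/(\eta z_2^* )$ where $z_2^*$ is the unique positive root of $P_2(z):=-\eta g_nk_prz^2+(g_0-r)\eta z+g_1k_i\mu$.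
   Context: $e_1,\dots,e_n$ is the standard basis of $\mathbb{R}^n$ and $x_n=e_n^Tx$. A real square matrix is Metzler if all its off-diagonal entries are nonnegative, and Hurwitz stable if all its eigenvalues have negative real part. *)

(* Defs.v *)
From HB Require Import structures.
From mathcomp Require Import all_boot all_order all_algebra.
From mathcomp Require Import complex.
Set Implicit Arguments. Unset Strict Implicit. Unset Printing Implicit Defensive.
Import Order.TTheory GRing.Theory Num.Theory.
Local Open Scope ring_scope.

(* Real numbers: an arbitrary real closed field R (covers R = the reals).
   Indices: R^(n+1) with e_1 = ord0 and e_{n+1} = ord_max, i.e. the
   paper's dimension n is written here as n.+1 (the paper needs n >= 1). *)

Definition metzler (R : rcfType) (n : nat) (A : 'M[R]_n) : Prop :=
  forall i j : 'I_n, i != j -> 0 <= A i j.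

Definition hurwitz (R : rcfType) (n : nat) (A : 'M[R]_n) : Prop :=
  forall l : R[i], eigenvalue (map_mx (real_complex R) A) l -> Re l < 0.

Definition evec {R : rcfType} {n : nat} (i : 'I_n) : 'cV[R]_n :=
  \col_(j < n) (if j == i then 1 else 0).

Definition cl_field (R : rcfType) (n : nat) (A : 'M[R]_n.+1) (b0 : 'cV[R]_n.+1)
  (mu theta eta ki kp : R) (x : 'cV[R]_n.+1) (z1 z2 : R)
  : 'cV[R]_n.+1 * R * R :=
  (A *m x + (ki * z1) *: evec ord0 - (kp * x ord_max 0 * z2) *: evec ord_max + b0,
   mu - eta * z1 * z2,
   theta * x ord_max 0 - eta * z1 * z2).

Definition is_equilibrium (R : rcfType) (n : nat) (A : 'M[R]_n.+1) (b0 : 'cV[R]_n.+1)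
  (mu theta eta ki kp : R) (x : 'cV[R]_n.+1) (z1 z2 : R) : Prop :=
  cl_field A b0 mu theta eta ki kp x z1 z2 = (0, 0, 0).

(* Main.v *)
Require Import Defs.
From HB Require Import structures.
From mathcomp Require Import all_boot all_order all_algebra.
From mathcomp Require Import complex polyrcf.
From mathcomp Require Import ring lra.
Import Order.TTheory GRing.Theory Num.Theory.
Set Implicit Arguments. Unset Strict Implicit. Unset Printing Implicit Defensive.
Local Open Scope ring_scope.

Lemma zlemma (R : realFieldType) m (M : 'M[R]_m) (v x : 'cV[R]_m) :
  (forall i j, i != j -> M i j <= 0) -> (forall i, 0 < v i 0) ->
  (forall i, 0 < (M *m v) i 0) ->
  (forall i, 0 <= (M *m x) i 0) -> forall i, 0 <= x i 0.
Proof.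
move=> HM Hv HMv HMx i1; rewrite leNgt; apply/negP => Hx1.
case: (@arg_minP _ _ _ i1 predT (fun i => x i 0 / v i 0) isT) => i0 _ Hmin.
set c := x i0 0 / v i0 0.
have Hc : c < 0.
  apply: le_lt_trans (Hmin i1 isT) _.
  by rewrite pmulr_llt0 ?invr_gt0.
have Hy : forall j, 0 <= x j 0 - c * v j 0.
  move=> j; rewrite subr_ge0 -ler_pdivlMr //; exact: Hmin.
have E : (M *m x) i0 0 = c * (M *m v) i0 0
           + \sum_j M i0 j * (x j 0 - c * v j 0).
  rewrite !mxE mulr_sumr -big_split /=; apply: eq_bigr => j _; ring.
have : (M *m x) i0 0 < 0.
  have h1 : c * (M *m v) i0 0 < 0 by rewrite nmulr_rlt0.
  rewrite E; suff : \sum_j M i0 j * (x j 0 - c * v j 0) <= 0 by lra.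
  apply: sumr_le0 => j _; case: (eqVneq i0 j) => [<-|Hne].
    by rewrite /c divfK ?subrr ?mulr0 // gt_eqF.
  by apply: mulr_le0_ge0; [exact: HM Hne|apply: Hy].
by rewrite ltNge HMx.
Qed.

Lemma zinv (R : realFieldType) m (M : 'M[R]_m) (v : 'cV[R]_m) :
  (forall i j, i != j -> M i j <= 0) -> (forall i, 0 < v i 0) ->
  (forall i, 0 < (M *m v) i 0) ->
  M \in unitmx /\ forall i j, 0 <= invmx M i j.
Proof.
move=> HM Hv HMv.
have Hu : M \in unitmx.
  rewrite unitmxE unitfE -det_tr; apply/negP => /det0P [w Hw0 Hw].
  move: Hw0; rewrite -[w]trmxK; set x := w^T.
  have HMx : M *m x = 0 by rewrite /x -[M]trmxK -trmx_mul Hw trmx0.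
  have H1 := @zlemma _ _ M v (x) HM Hv HMv.
  have H2 := @zlemma _ _ M v (- x) HM Hv HMv.
  suff -> : x = 0 by rewrite trmx0 eqxx.
  apply/matrixP => i j; rewrite (ord1 j) [RHS]mxE.
  have a := H1 (fun i => ltac:(by rewrite HMx mxE)) i.
  have b := H2 (fun i => ltac:(by rewrite mulmxN HMx oppr0 mxE)) i.
  rewrite [X in 0 <= X]mxE in b; lra.
split=> // i j.
have H := @zlemma _ _ M v (col j (invmx M)) HM Hv HMv.
have : forall k, 0 <= (M *m col j (invmx M)) k 0.
  by move=> k; rewrite colE mulmxA mulmxV // mul1mx mxE ler0n.
by move/H/(_ i); rewrite mxE.
Qed.

Lemma char_eval (R : comNzRingType) n (A : 'M[R]_n) (t : R) :
  map_mx (horner_eval t) (char_poly_mx A) = t%:M - A.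
Proof. by apply/matrixP => i j; rewrite !mxE horner_evalE hornerD hornerN hornerMn hornerX hornerC. Qed.

Lemma char_horner (R : comNzRingType) n (A : 'M[R]_n) (t : R) :
  (char_poly A).[t] = \det (t%:M - A).
Proof. by rewrite -char_eval det_map_mx /= horner_evalE. Qed.

Lemma det_pos (R : rcfType) n (A : 'M[R]_n) : hurwitz A ->
  forall t, 0 <= t -> 0 < \det (t%:M - A).
Proof.
move=> HA t Ht; rewrite -char_horner.
have Hnr : forall y, 0 <= y -> ~~ root (char_poly A) y.
  move=> y Hy; apply/negP => Hr.
  have Hr' := rmorph_root (real_complex R) Hr.
  rewrite map_char_poly -eigenvalue_root_char in Hr'.
  by have := HA _ Hr'; rewrite -complexRe ltcE /= => /andP [_]; rewrite ltNge Hy.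
have Hlc : 0 < lead_coef (char_poly A).
  by move: (char_poly_monic A) => /monicP ->; exact: ltr01.
have [N HN] := poly_pinfty_gt_lc Hlc.
have Hx : lead_coef (char_poly A) <= (char_poly A).[Num.max t N].
  by apply: HN; rewrite le_max lexx orbT.
case: (ltP 0 (char_poly A).[t]) => // Hle.
have [y Hy Hry] := @poly_ivt _ (char_poly A) t (Num.max t N) (ltac:(by rewrite le_max lexx))
   (ltac:(by rewrite Hle (ltW (lt_le_trans Hlc Hx)))).
case/andP: Hy => Hy _; have := Hnr y (le_trans Ht Hy); by rewrite Hry.
Qed.

Lemma sum_ge_term (R : numDomainType) m (F : 'I_m -> R) i :
  (forall j, 0 <= F j) -> F i <= \sum_j F j.
Proof.
move=> HF; rewrite (bigD1 i) //= lerDl; exact: sumr_ge0.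
Qed.

Lemma mulmx_ge0 (R : numDomainType) m n p (P : 'M[R]_(m, n)) (Q : 'M[R]_(n, p)) :
  (forall i j, 0 <= P i j) -> (forall i j, 0 <= Q i j) ->
  forall i j, 0 <= (P *m Q) i j.
Proof. by move=> HP HQ i j; rewrite mxE; apply: sumr_ge0 => k _; exact: mulr_ge0. Qed.

Lemma invmxM' (R : comUnitRingType) m (P N : 'M[R]_m) :
  P \in unitmx -> N \in unitmx -> invmx (P *m N) = invmx N *m invmx P.
Proof.
move=> HP HN; have HPN : P *m N \in unitmx by rewrite unitmx_mul HP.
have E1 : (P *m N) *m (invmx N *m invmx P) = 1%:M.
  by rewrite -mulmxA (mulmxA N) mulmxV // mul1mx mulmxV.
by rewrite -[LHS]mulmx1 -E1 mulmxA mulVmx // mul1mx.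
Qed.

Definition good (R : realFieldType) m (A : 'M[R]_m) (t : R) :=
  (t%:M - A) \in unitmx /\ forall i j, 0 <= invmx (t%:M - A) i j.
Arguments good {R m}.

Lemma large_good (R : rcfType) m (A : 'M[R]_m) :
  metzler A -> forall t, 1 + \sum_i \sum_j `|A i j| <= t -> good A t.
Proof.
move=> HA t Ht; apply: (@zinv _ _ _ (const_mx 1)).
- by move=> i j Hij; rewrite !mxE (negPf Hij) mulr0n sub0r oppr_le0; exact: HA.
- by move=> i; rewrite mxE ltr01.
move=> i; rewrite mxE.
under eq_bigr => j _ do rewrite !mxE mulr1.
have -> : \sum_j (t *+ (i == j) - A i j) = t - \sum_j A i j.
  rewrite sumrB; congr (_ - _).
  rewrite (bigD1 i) //= eqxx mulr1n big1 ?addr0 // => j Hj.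
  by rewrite eq_sym (negPf Hj) mulr0n.
have H1 : \sum_j A i j <= \sum_j `|A i j|.
  by apply: ler_sum => j _; exact: ler_norm.
have H2 : \sum_j `|A i j| <= \sum_i \sum_j `|A i j|.
  apply: (@sum_ge_term _ _ (fun i => \sum_j `|A i j|)) => k.
  by apply: sumr_ge0 => j _.
lra.
Qed.

Lemma local_prop (R : realFieldType) m (A : 'M[R]_m) t : good A t ->
  exists2 e, 0 < e & forall s, t - e <= s -> s <= t -> good A s.
Proof.
move=> [Hu Hp]; set Rm := invmx (t%:M - A).
set K := \sum_i \sum_j Rm i j.
have HK : 0 <= K by apply: sumr_ge0 => i _; apply: sumr_ge0.
exists (K + 1)^-1; first by rewrite invr_gt0; lra.
move=> s Hs1 Hs2; set d := t - s.
have Hd0 : 0 <= d by rewrite /d; lra.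
have HdK : d * K < 1.
  have Hd : d <= (K + 1)^-1 by rewrite /d; lra.
  have HK1 : 0 < K + 1 by lra.
  have : d * (K + 1) <= (K + 1)^-1 * (K + 1) by apply: ler_wpM2r => //; lra.
  rewrite mulVf ?(gt_eqF HK1) //.
  nra.
set N := 1%:M - d *: Rm.
have [HNu HNp] : N \in unitmx /\ forall i j, 0 <= invmx N i j.
  apply: (@zinv _ _ _ (const_mx 1)).
  - by move=> i j Hij; rewrite !mxE (negPf Hij) mulr0n sub0r oppr_le0;
       apply: mulr_ge0.
  - by move=> i; rewrite mxE ltr01.
  move=> i; rewrite mxE.
  under eq_bigr => j _ do rewrite !mxE mulr1.
  have -> : \sum_j ((i == j)%:R - d * Rm i j) = 1 - d * \sum_j Rm i j.
    rewrite sumrB -mulr_sumr; congr (_ - _).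
    rewrite (bigD1 i) //= eqxx big1 ?addr0 // => j Hj.
    by rewrite eq_sym (negPf Hj).
  have : \sum_j Rm i j <= K.
    by apply: (@sum_ge_term _ _ (fun i => \sum_j Rm i j)) => k; apply: sumr_ge0.
  nra.
have E : s%:M - A = (t%:M - A) *m N.
  rewrite /N mulmxBr mulmx1 -scalemxAr mulmxV // scalemx1.
  have -> : s = t - d by rewrite /d; ring.
  by rewrite raddfB /=; rewrite addrAC.
split; first by rewrite E unitmx_mul Hu.
by rewrite E invmxM' //; apply: mulmx_ge0.
Qed.

Lemma adj_eval (R : comNzRingType) m (A : 'M[R]_m) (t : R) i j :
  ((\adj (char_poly_mx A)) i j).[t] = \adj (t%:M - A) i j.
Proof.
by rewrite -char_eval -map_mx_adj [RHS]mxE.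
Qed.

Definition goodp (R : rcfType) m (A : 'M[R]_m) (t : R) :=
  forall i j, 0 <= ((\adj (char_poly_mx A)) i j).[t].
Arguments goodp {R m}.

Lemma good_goodp (R : rcfType) m (A : 'M[R]_m) t : hurwitz A -> 0 <= t ->
  good A t <-> goodp A t.
Proof.
move=> HA Ht; have Hd := det_pos HA Ht.
have Hu : (t%:M - A) \in unitmx by rewrite unitmxE unitfE gt_eqF.
have E : forall i j, invmx (t%:M - A) i j = (\det (t%:M - A))^-1 * \adj (t%:M - A) i j.
  by move=> i j; rewrite /invmx Hu mxE.
split.
- move=> [_ H] i j; rewrite adj_eval.
  have := H i j; rewrite E pmulr_rge0 //; by rewrite invr_gt0.
- move=> H; split=> // i j; rewrite E; apply: mulr_ge0; first by rewrite invr_ge0 ltW.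
  by rewrite -adj_eval.
Qed.

Definition Qp (R : rcfType) m (A : 'M[R]_m) : {poly R} :=
  \prod_(k : 'I_m * 'I_m)
     (if (\adj (char_poly_mx A)) k.1 k.2 == 0 then 1
      else (\adj (char_poly_mx A)) k.1 k.2).

Lemma Qp_neq0 (R : rcfType) m (A : 'M[R]_m) : Qp A != 0.
Proof.
rewrite /Qp prodf_seq_neq0; apply/allP => k _ /=.
by case: ifP => [_|/negbT]; rewrite ?oner_neq0.
Qed.

Lemma Qp_root (R : rcfType) m (A : 'M[R]_m) i j x :
  (\adj (char_poly_mx A)) i j != 0 -> root ((\adj (char_poly_mx A)) i j) x ->
  root (Qp A) x.
Proof.
move=> Hq Hr; rewrite /Qp rootE horner_prod (bigD1 (i, j)) //= (negPf Hq).
by move/eqP: Hr => ->; rewrite mul0r.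
Qed.

Lemma step (R : rcfType) m (A : 'M[R]_m) a c : hurwitz A -> 0 <= a -> a < c ->
  (forall s, c <= s -> goodp A s) -> {in `]a, c[, forall x, ~~ root (Qp A) x} ->
  forall s, a <= s -> goodp A s.
Proof.
move=> HA Ha Hac Hc Hno s Has.
case: (leP c s) => [/Hc //|Hsc].
have Hc0 : 0 <= c by apply: le_trans Ha (ltW Hac).
have [e He Hloc] := local_prop ((good_goodp HA Hc0).2 (Hc c (lexx c))).
set s0 := if (a + c) / 2 <= c - e then c - e else (a + c) / 2.
have [Hs0a Hs0c Hs0e] : [/\ a < s0, s0 < c & c - e <= s0].
  by rewrite /s0; case: ifP => H; [|move/negbT: H; rewrite -ltNge => H]; split; lra.
have Hs0 : goodp A s0.
  by apply/(good_goodp HA (ltW (le_lt_trans Ha Hs0a))); apply: Hloc => //; exact: ltW.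
move=> i j; set q := (\adj (char_poly_mx A)) i j.
case: (eqVneq q 0) => [->|Hq]; first by rewrite horner0.
rewrite leNgt; apply/negP => Hneg.
have Hq0 := Hs0 i j; rewrite -/q in Hq0.
case: (leP s s0) => Hss0.
- have [x /andP [Hx1 Hx2] Hr] := @poly_ivt _ q s s0 Hss0
     (ltac:(by rewrite (ltW Hneg) Hq0)).
  have Hxs : s < x.
    rewrite lt_neqAle Hx1 andbT; apply/eqP => Exs.
    by move: Hr; rewrite -Exs rootE lt_eqF.
  have := Hno x; rewrite in_itv /= (Qp_root Hq Hr).
  by move/(_ (ltac:(apply/andP; split; lra))).
- have [x /andP [Hx1 Hx2] Hr] := @poly_ivt _ (- q) s0 s (ltW Hss0)
     (ltac:(rewrite !hornerN oppr_le0 Hq0 oppr_ge0 /=; exact: ltW)).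
  rewrite rootN in Hr.
  have := Hno x; rewrite in_itv /= (Qp_root Hq Hr).
  by move/(_ (ltac:(apply/andP; split; lra))).
Qed.

Lemma all_good (R : rcfType) m (A : 'M[R]_m) : metzler A -> hurwitz A ->
  forall t, 0 <= t -> goodp A t.
Proof.
move=> HM HA t0 Ht0.
set T := 1 + \sum_i \sum_j `|A i j|.
have HT0 : 0 <= \sum_i \sum_j `|A i j| by apply: sumr_ge0 => i _; apply: sumr_ge0.
have HT : forall s, T <= s -> goodp A s.
  move=> s Hs; apply/(good_goodp HA); first by rewrite /T in Hs; lra.
  exact: large_good.
suff H : forall k c, t0 <= c -> (size (roots (Qp A) t0 c) <= k)%N ->
    (forall s, c <= s -> goodp A s) -> forall s, t0 <= s -> goodp A s.
  apply: (H _ (Num.max t0 T)) => //; first by rewrite le_max lexx.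
  by move=> s Hs; apply: HT; apply: le_trans Hs; rewrite le_max lexx orbT.
elim=> [|k IH] c Hc Hsz Hgc.
all: case: (eqVneq t0 c) => [-> //|Hne].
all: have Htc : t0 < c by rewrite lt_neqAle Hne.
all: case: (prev_rootP (Qp A) t0 c) => [Q0|y _ Hy0 Hyin Hnoy|c' _ Hc' Hno].
all: try by move: (Qp_neq0 A); rewrite Q0 eqxx.
all: try by apply: (step HA Ht0 Htc Hgc).
all: have Hyr : y \in roots (Qp A) t0 c by
       apply: root_in_roots => //; [exact: Qp_neq0 | rewrite rootE Hy0].
- by move: Hsz; rewrite leqn0 => /nilP Hn; rewrite Hn in Hyr.
have [Hy1 Hy2] : t0 < y /\ y < c by move: Hyin; rewrite in_itv /= => /andP.
apply: (IH y (ltW Hy1)); last by apply: (step HA (ltW (le_lt_trans Ht0 Hy1)) Hy2 Hgc).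
have Hsub : {subset y :: roots (Qp A) t0 y <= roots (Qp A) t0 c}.
  move=> x; rewrite inE => /orP [/eqP -> //| Hx].
  have := roots_in Hx; rewrite in_itv /= => /andP [Hx1 Hx2].
  apply: root_in_roots; [exact: Qp_neq0| |exact: root_roots Hx].
  by rewrite in_itv /=; apply/andP; split; lra.
have Hu : uniq (y :: roots (Qp A) t0 y).
  rewrite /= uniq_roots andbT; apply/negP => /roots_in.
  by rewrite in_itv /= ltxx andbF.
have := uniq_leq_size Hu Hsub; rewrite /=.
by move=> H; rewrite -ltnS; apply: leq_trans H Hsz.
Qed.

Lemma Binv (R : rcfType) m (A : 'M[R]_m) : metzler A -> hurwitz A ->
  A \in unitmx /\ forall i j, 0 <= - invmx A i j.
Proof.
move=> HM HA.
have [Hu Hp] := (good_goodp HA (lexx 0)).2 (all_good HM HA (lexx 0)).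
have E : (0%:M - A) = (-1) *: A by rewrite raddf0 sub0r scaleN1r.
have Hu' : A \in unitmx by move: Hu; rewrite E unitmxZ // unitrN1.
split => // i j; have := Hp i j.
by rewrite E invmxZ -?E // invrN1 scaleN1r mxE.
Qed.

Lemma evec_col (R : rcfType) m (M : 'M[R]_m) i j :
  (M *m evec j) i 0 = M i j.
Proof.
rewrite mxE (bigD1 j) //= mxE eqxx mulr1 big1 ?addr0 // => k Hk.
by rewrite mxE (negPf Hk) mulr0.
Qed.

Lemma diag_pos (R : rcfType) m (A : 'M[R]_m) i : metzler A -> hurwitz A ->
  0 < - invmx A i i.
Proof.
move=> HM HA; have [Hu Hp] := Binv HM HA.
have E : \sum_k (- A i k) * (- invmx A k i) = 1.
  have := mulmxV Hu; move/matrixP/(_ i i); rewrite !mxE eqxx mulr1n => <-.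
  by apply: eq_bigr => k _; rewrite mulrNN.
rewrite lt_neqAle Hp andbT; apply/negP => /eqP H0.
move: E; rewrite (bigD1 i) //= -H0 mulr0 add0r => E.
have : \sum_(k | k != i) (- A i k) * (- invmx A k i) <= 0.
  apply: sumr_le0 => k Hk; apply: mulr_le0_ge0 => //.
  by rewrite oppr_le0; apply: HM; rewrite eq_sym.
by rewrite E ler10.
Qed.

Lemma lin_entry (R : comNzRingType) m (M : 'M[R]_m) (u w y : 'cV[R]_m) a b i :
  (- (M *m (a *: u - b *: w + y))) i 0 =
  a * - (M *m u) i 0 - b * - (M *m w) i 0 + - (M *m y) i 0.
Proof.
rewrite mulmxDr mulmxBr -!scalemxAr.
move: (M *m u) (M *m w) (M *m y) => U W Y; rewrite !mxE; ring.
Qed.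

Lemma quad_uniq (R : realFieldType) (a b c z w : R) : 0 < a -> 0 < c ->
  0 < z -> 0 < w -> a * z ^+ 2 + b * z - c = 0 -> a * w ^+ 2 + b * w - c = 0 ->
  z = w.
Proof.
move=> Ha Hc Hz Hw Ez Ew.
have : (z - w) * (a * (z + w) + b) = 0.
  have -> : (z - w) * (a * (z + w) + b) =
     (a * z ^+ 2 + b * z - c) - (a * w ^+ 2 + b * w - c) by ring.
  by rewrite Ez Ew subrr.
move/eqP; rewrite mulf_eq0 => /orP [|] /eqP H; first by apply/eqP; rewrite -subr_eq0 H.
have Hazw : 0 < a * z * w by rewrite !mulr_gt0.
have : a * z ^+ 2 + b * z - c = - (a * z * w) - c - z * (- (a * (z + w) + b)).
  by ring.
rewrite Ez H oppr0 mulr0 subr0 => E; lra.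
Qed.

Lemma quad_root (R : rcfType) (a b c : R) : 0 < a -> 0 < c ->
  exists z, 0 < z /\ a * z ^+ 2 + b * z - c = 0.
Proof.
move=> Ha Hc; set D := b ^+ 2 + 4 * a * c.
have HD : 0 <= D by rewrite /D; apply: addr_ge0; [exact: sqr_ge0| rewrite !mulr_ge0 // ltW].
set S := Num.sqrt D.
have HS : S ^+ 2 = D by rewrite sqr_sqrtr.
have HS0 : 0 <= S by rewrite sqrtr_ge0.
exists ((- b + S) / (2 * a)); split.
  apply: divr_gt0; last by lra.
  have Hac : 0 < a * c by rewrite mulr_gt0.
  rewrite /D in HS; nra.
have -> : a * ((- b + S) / (2 * a)) ^+ 2 + b * ((- b + S) / (2 * a)) - c
          = (S ^+ 2 - D) / (4 * a).
  rewrite /D; field; lra.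
by rewrite HS subrr mul0r.
Qed.

Unset Implicit Arguments.

Theorem mainTheorem1 (R : rcfType) (n : nat) (A : 'M[R]_n.+1) (b0 : 'cV[R]_n.+1)
  (mu theta eta ki kp : R) :
  metzler A -> hurwitz A -> (forall i, 0 <= b0 i 0) ->
  0 < mu -> 0 < theta -> 0 < eta -> 0 < ki -> 0 < kp ->
  let r := mu / theta in
  let g1 := - (invmx A *m evec ord0) ord_max 0 in
  let gn := - (invmx A *m evec ord_max) ord_max 0 in
  let g0 := - (invmx A *m b0) ord_max 0 in
  g1 != 0 ->
  let P1 : {poly R} := (eta * g1 * ki)%:P * 'X^2 + ((g0 - r) * eta)%:P * 'X
                         - (gn * kp * mu * r)%:P in
  let P2 : {poly R} := (- eta * gn * kp * r)%:P * 'X^2 + ((g0 - r) * eta)%:P * 'X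
                         + (g1 * ki * mu)%:P in
  exists z1s : R,
    [/\ 0 < z1s /\ root P1 z1s,
        (forall z, 0 < z -> root P1 z -> z = z1s),
        (forall (x : 'cV[R]_n.+1) (z1 z2 : R), 0 < z1 ->
           is_equilibrium A b0 mu theta eta ki kp x z1 z2 <->
           [/\ z1 = z1s, z2 = mu / (eta * z1s) &
               x = - (invmx A *m ((ki * z1s) *: evec ord0
                        - (kp * r * mu / (eta * z1s)) *: evec ord_max + b0))]),
        (- (invmx A *m ((ki * z1s) *: evec ord0
              - (kp * r * mu / (eta * z1s)) *: evec ord_max + b0))) ord_max 0 = r &
        exists z2s : R,
          [/\ 0 < z2s, root P2 z2s,
              (forall z, 0 < z -> root P2 z -> z = z2s) &
              z1s = mu / (eta * z2s)]].
Proof.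
move=> HM HH Hb Hmu Hth Het Hki Hkp r g1 gn g0 Hg1 P1 P2.
have [HAu HB] := Binv HM HH.
have Hr : 0 < r by rewrite /r divr_gt0.
have Hg1p : 0 < g1.
  by rewrite lt_neqAle eq_sym Hg1 /= /g1 evec_col.
have Hgnp : 0 < gn.
  rewrite /gn evec_col; exact: diag_pos.
have HP1 : forall z, P1.[z] = (eta * g1 * ki) * z ^+ 2 + ((g0 - r) * eta) * z
                               - gn * kp * mu * r.
  by move=> z; rewrite /P1 !hornerE.
have HP2 : forall z, P2.[z] = (- eta * gn * kp * r) * z ^+ 2 + ((g0 - r) * eta) * z
                               + g1 * ki * mu.
  by move=> z; rewrite /P2 !hornerE.
have Ha : 0 < eta * g1 * ki by apply: mulr_gt0 => //; apply: mulr_gt0.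
have Hc : 0 < gn * kp * mu * r.
  by apply: mulr_gt0 => //; apply: mulr_gt0 => //; apply: mulr_gt0.
have [z1s [Hz1s Hroot]] := quad_root ((g0 - r) * eta) Ha Hc.
have Hroot1 : root P1 z1s by rewrite rootE HP1 Hroot.
have Huniq : forall z, 0 < z -> root P1 z -> z = z1s.
  move=> z Hz; rewrite rootE HP1 => /eqP Ez; exact: quad_uniq Ha Hc Hz Hz1s Ez Hroot.
set v := fun z : R => (ki * z) *: evec ord0 - (kp * r * mu / (eta * z)) *: evec ord_max + b0.
have Hxn : forall z, 0 < z ->
    (- (invmx A *m v z)) ord_max 0 - r = P1.[z] / (eta * z).
  move=> z Hz; rewrite /v lin_entry -/g1 -/gn -/g0 HP1.
  field; apply/andP; split; rewrite gt_eqF //.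
have Hx1s : (- (invmx A *m v z1s)) ord_max 0 = r.
  by apply/eqP; rewrite -subr_eq0 Hxn // (rootP Hroot1) mul0r.
exists z1s; split => //.
- move=> x z1 z2 Hz1; rewrite /is_equilibrium /cl_field; split.
  + case=> E1 E2 E3.
    have Ez2 : z2 = mu / (eta * z1).
      have : eta * z1 * z2 = mu by lra.
      move=> <-; field; apply/andP; split; rewrite gt_eqF //.
    have Exn : x ord_max 0 = r.
      have : theta * x ord_max 0 = mu by lra.
      move=> H; rewrite /r -H; field; rewrite gt_eqF //.
    have Ex : x = - (invmx A *m v z1).
      have : A *m x = - v z1.
        apply/eqP; rewrite -subr_eq0 opprK -E1 /v Exn Ez2.
        apply/eqP/matrixP => i j; rewrite !mxE; ring.
      by move=> HAx; rewrite -[x]mul1mx -(mulVmx HAu) -mulmxA HAx mulmxN.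
    have Ez1 : z1 = z1s.
      apply: Huniq => //; rewrite rootE.
      have := Hxn z1 Hz1; rewrite -Ex Exn subrr => /esym/eqP.
      by rewrite mulf_eq0 invr_eq0 mulf_eq0 (gt_eqF Het) (gt_eqF Hz1) !orbF.
    by split => //; rewrite -Ez1.
  + case=> -> -> Ex.
    have Exn : x ord_max 0 = r by rewrite Ex.
    have HAx : A *m x = - v z1s by rewrite Ex mulmxN mulmxA mulmxV // mul1mx.
    rewrite Exn HAx /r.
    congr (_, _, _).
    * rewrite /v /r; apply/matrixP => i j; rewrite !mxE; ring.
    * field; apply/andP; split; rewrite gt_eqF //.
    * field; rewrite !gt_eqF //.
- set z2s := mu / (eta * z1s).
  have Hz2s : 0 < z2s by rewrite /z2s !divr_gt0 ?mulr_gt0.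
  have HPP : forall z, 0 < z -> P2.[mu / (eta * z)] = mu / (eta * z ^+ 2) * P1.[z].
    move=> z Hz; rewrite HP1 HP2; field; apply/andP; split; rewrite gt_eqF //.
  exists z2s; split => //.
  + by rewrite rootE HPP // (rootP Hroot1) mulr0.
  + move=> w Hw; rewrite rootE => /eqP Hw0.
    set z := mu / (eta * w).
    have Hz : 0 < z by rewrite /z divr_gt0 ?mulr_gt0.
    have Ew : w = mu / (eta * z).
      rewrite /z; field; rewrite !gt_eqF //.
    have Ez : z = z1s.
      apply: Huniq => //; rewrite rootE.
      move: Hw0; rewrite Ew HPP // => /eqP; rewrite mulf_eq0 => /orP [|//].
      by rewrite mulf_eq0 invr_eq0 mulf_eq0 expf_eq0 (gt_eqF Hmu) (gt_eqF Het) (gt_eqF Hz) andbF.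
    by rewrite Ew Ez.
  + rewrite /z2s; field; rewrite !gt_eqF //.
Qed.
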